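(* Let $\pi\in D_n$ and use the block decomposition and notation described in the context. Assume $r_\mu\ge 1$ and $\sum_{j=1}^{r_\mu} i_{k_j}\le k_1$ (i.e. $\Phi(\pi)$ is a standard OGS elementary element). Then $\pi$ can be written uniquely as $\pi=\pi^{\bullet}\cdot\pi^{\circ}$ with $\pi^{\bullet}\in Id^{\bullet}_n$ and $\pi^{\circ}\in S^{\circ}_n$, and $$\pi^{\circ}=\prod_{j=1}^{r_\mu}t_{k_j}^{i_{k_j}},\qquad \pi^{\bullet}=\Big(\prod_{\alpha\in A} w_{\operatorname{maj}_\alpha(\pi)}\Big)\cdot w_{L_{1_1}}\cdots w_{L_{1_{\nu_1}}}\cdot w_{L_{2_1}}\cdots w_{L_{2_{\nu_2}}}\cdots w_{L_{(\mu-1)_1}}\cdots w_{L_{(\mu-1)_{\nu_{\mu-1}}}},$$ where $A=\{\alpha\in\{1,\dots,\mu-1\}:\ \nu_\alpha \text{ is odd and } 1\le \operatorname{maj}_\alpha(\pi)<k_1\}$, the first product taken in increasing order of $\alpha$. Moreover, viewed in $S_n$, $\pi^{\circ}$ has the same standard OGS form as $\Phi(\pi)$.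
   Context: $D_n$ ($n\ge2$) is the Coxeter group with generators $s_{1'},s_1,\dots,s_{n-1}$ and relations $s^2=1$, $(s_i s_{i+1})^3=1$, $(s_is_j)^2=1$ for $|i-j|\ge 2$, $(s_{1'}s_2)^3=1$, $(s_{1'}s_i)^2=1$ for $i\ne 2$. Put $t_k=s_1\cdots s_{k-1}$ ($2\le k\le n$), $w_k=s_k s_{k-1}\cdots s_2 s_1 s_{1'} s_2\cdots s_k$ ($1\le k\le n-1$). Every $\pi\in D_n$ has a unique expression $w_{1}^{j_{1}} t_{2}^{i_{2}} w_{2}^{j_{2}} \cdots w_{n-1}^{j_{n-1}} t_{n}^{i_{n}}$ ($0\le i_k\le k-1$, $0\le j_k\le1$). $\Phi:D_n\to S_n$ is the homomorphism $s_{1'}\mapsto s_1$, $s_i\mapsto s_i$; $\Phi(\pi)=t_2^{i_2}\cdots t_n^{i_n}$ in $S_n$. $S^{\circ}_n=\langle s_1,\dots,s_{n-1}\rangle\le D_n$, and $Id^\bullet_n=\{\pi:\Phi(\pi)=1\}=\langle w_1,\dots,w_{n-1}\rangle$. Block decomposition: deleting factors with zero exponent, the expression of $\pi$ becomes a word of factors $t_k^{i}$ ($i\ge1$) and $w_L$; grouping maximal runs gives $\pi=\pi_1^\circ\pi_1^\bullet\pi_2^\circ\pi_2^\bullet\cdots\pi_{\mu-1}^\circ\pi_{\mu-1}^\bullet\pi_\mu^\circ$, where each $\pi_\alpha^\bullet=w_{L_{\alpha_1}}\cdots w_{L_{\alpha_{\nu_\alpha}}}$ ($\nu_\alpha\ge1$,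 $L_{\alpha_1}<\dots<L_{\alpha_{\nu_\alpha}}$) is a maximal run of $w$-factors, each $\pi_\alpha^\circ$ with $2\le\alpha\le\mu-1$ is a nonempty maximal run of $t$-factors, and $\pi_1^\circ,\pi_\mu^\circ$ are runs of $t$-factors that may be empty ($=1$). Listing all $t$-factors in order as $t_{k_1}^{i_{k_1}},\dots,t_{k_{r_\mu}}^{i_{k_{r_\mu}}}$ ($k_1<\dots<k_{r_\mu}$), $\pi_\alpha^\circ$ consists of those with indices $r_{\alpha-1}+1,\dots,r_\alpha$ ($r_0=0$). Define $\operatorname{maj}_\alpha(\pi)=\sum_{j=1}^{r_\alpha}i_{k_j}$. *)

(* Defs.v *)
(* D_n is realized concretely as the group of even signed
   permutations of {+-1,...,+-n}: permutations of bool * 'I_n (the boolean is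
   the sign, true = negative; point k in 1..n is the ordinal k-1), generated by
   the images of the Coxeter generators s_{1'}, s_1, ..., s_{n-1}. *)
From mathcomp Require Import all_boot all_order all_fingroup.
Set Implicit Arguments.
Unset Strict Implicit.
Unset Printing Implicit Defensive.

Import GroupScope.
Local Open Scope group_scope.

Section Defs.
Variable n : nat.

Definition pt := (bool * 'I_n)%type.

Definition sgen (k : nat) : {perm pt} :=
  match (insub k.-1 : option 'I_n), (insub k : option 'I_n) with
  | Some a, Some b => tperm (false, a) (false, b) * tperm (true, a) (true, b)
  | _, _ => 1
  end.

Definition sgen1' : {perm pt} :=
  match (insub 0%N : option 'I_n), (insub 1%N : option 'I_n) with
  | Some a, Some b => tperm (false, a) (true, b) * tperm (true, a) (false, b)
  | _, _ => 1
  end.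

Definition Sgens : {set {perm pt}} := [set sgen k | k : 'I_n & 0 < k].

Definition Dn : {set {perm pt}} := << sgen1' |: Sgens >>.
Definition Scirc : {set {perm pt}} := << Sgens >>.

Definition Phi (p : {perm pt}) (x : 'I_n) : 'I_n := (p (false, x)).2.

Definition Idbullet : {set {perm pt}} :=
  [set p in Dn | [forall x : 'I_n, Phi p x == x]].

(* t_k = s_1 ... s_{k-1} ;  w_k = s_k ... s_1 s_{1'} s_2 ... s_k *)
Definition tD (k : nat) : {perm pt} := \prod_(1%N <= m < k) sgen m.
Definition wD (k : nat) : {perm pt} :=
  (\prod_(m <- rev (iota 1%N k)) sgen m) * sgen1' * \prod_(m <- iota 2%N k.-1) sgen m.

Definition nf (i j : nat -> nat) : {perm pt} :=
  \prod_(1%N <= k < n) (wD k ^+ j k * tD k.+1 ^+ i k.+1).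

Definition sS (k : nat) : {perm 'I_n} :=
  match (insub k.-1 : option 'I_n), (insub k : option 'I_n) with
  | Some a, Some b => tperm a b
  | _, _ => 1
  end.
Definition tS (k : nat) : {perm 'I_n} := \prod_(1%N <= m < k) sS m.

Inductive fac := FT of nat & nat (* t_k^e *) | FW of nat .

Definition isW (f : fac) : bool := if f is FW _ then true else false.
Definition texp (f : fac) : nat := if f is FT _ e then e else 0.
Definition wval (f : fac) : {perm pt} := if f is FW L then wD L else 1.

Definition red (i j : nat -> nat) : seq fac :=
  flatten [seq (if j k != 0 then [:: FW k] else [::]) ++
               (if i k.+1 != 0 then [:: FT k.+1 (i k.+1)] else [::])
          | k <- iota 1%N n.-1].

Definition tidx (i : nat -> nat) : seq nat := [seq k <- iota 2%N n.-1 | i k != 0].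

End Defs.

Fixpoint chunk (s : seq fac) : seq (seq fac) :=
  match s with
  | [::] => [::]
  | x :: s' =>
      let cs := chunk s' in
      match cs with
      | (y :: g) :: rest =>
          if isW x == isW y then (x :: y :: g) :: rest else [:: x] :: cs
      | _ => [:: x] :: cs
      end
  end.

Definition isWchunk (c : seq fac) : bool := if c is f :: _ then isW f else false.

(* sum of the exponents of all t-factors in the runs before position m;
   for the run of w's at position m (= pi^bullet_alpha) this is maj_alpha *)
Definition majAt (cs : seq (seq fac)) (m : nat) : nat :=
  sumn [seq texp f | f <- flatten (take m cs)].

Section Defs2.
Variable n : nat.

Definition inA (i j : nat -> nat) (m : nat) : bool :=
  let cs := chunk (red n i j) in
  let c := nth [::] cs m in
  [&& isWchunk c, odd (size c), 0 < majAt cs m & majAt cs m < head 0 (tidx n i)].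

Definition piCirc (i : nat -> nat) : {perm pt n} :=
  \prod_(k <- tidx n i) tD n k ^+ i k.

Definition piBullet (i j : nat -> nat) : {perm pt n} :=
  let cs := chunk (red n i j) in
  (\prod_(m < size cs | inA i j m) wD n (majAt cs m)) *
  \prod_(f <- red n i j | isW f) wval n f.

Definition PhiOGS (i : nat -> nat) : {perm 'I_n} :=
  \prod_(k <- tidx n i) tS n k ^+ i k.

End Defs2.

(* Main.v *)
Require Import Defs.
From mathcomp Require Import all_boot all_order all_fingroup.
From mathcomp Require Import zify.
Import GroupScope.
Local Open Scope group_scope.
Set Implicit Arguments. Unset Strict Implicit. Unset Printing Implicit Defensive.

Section SP.
Variable n : nat.

Definition spf (f : 'I_n -> bool) (g : {perm 'I_n}) (p : pt n) : pt n :=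
  (p.1 (+) f p.2, g p.2).

Lemma spf_inj f g : injective (spf f g).
Proof.
move=> [b x] [c y] [] /= H1 /perm_inj exy; subst y; congr (_, _).
by move: H1; case: b; case: c; case: (f x).
Qed.

Definition sp f g : {perm pt n} := perm (@spf_inj f g).
Local Notation sp0 g := (sp (fun _ => false) g).

Lemma spE f g b x : sp f g (b, x) = (b (+) f x, g x).
Proof. by rewrite permE. Qed.

Lemma sp_eq f f' g g' : f =1 f' -> g = g' -> sp f g = sp f' g'.
Proof. move=> H <-; apply/permP => -[b x]; by rewrite !spE H. Qed.

Lemma spM f g f' g' :
  sp f g * sp f' g' = sp (fun x => f x (+) f' (g x)) (g * g').
Proof. by apply/permP => [[b x]]; rewrite permM !spE permM /= addbA. Qed.

Lemma sp0_1 : sp0 1 = 1.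
Proof. by apply/permP => -[b x]; rewrite spE !perm1 addbF. Qed.

Lemma sp0M g g' : sp0 g * sp0 g' = sp0 (g * g').
Proof. by rewrite spM; apply: sp_eq. Qed.

Lemma sp0X g e : sp0 g ^+ e = sp0 (g ^+ e).
Proof.
elim: e => [|e IH]; first by rewrite !expg0 sp0_1.
by rewrite !expgS IH sp0M.
Qed.

Lemma sp_inj f g f' g' : sp f g = sp f' g' -> f =1 f' /\ g = g'.
Proof.
move=> E; split.
  by move=> x; have := congr1 (fun p : {perm pt n} => (p (false, x)).1) E; rewrite /= !spE.
apply/permP => x; have := congr1 (fun p : {perm pt n} => (p (false, x)).2) E.
by rewrite /= !spE.
Qed.

Lemma sgen_sp k : sgen n k = sp0 (sS n k).
Proof.
rewrite /sgen /sS; case: (insub k.-1 : option 'I_n) => [a|]; case: (insub k : option 'I_n) => [b|];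
  try by rewrite sp0_1.
apply/permP => [[c x]]; rewrite permM spE addbF.
case: (tpermP a b x) => [->|->|xa xb].
- by case: c; rewrite !permE /= ?eqxx.
- case: (eqVneq a b) => [<-|nab]; first by case: c; rewrite !permE /= ?eqxx.
  by case: c; rewrite !permE /= ?xpair_eqE /= ?eqxx /= ?(negbTE nab) ?(eq_sym b a) ?(negbTE nab) /= ?xpair_eqE ?eqxx /= ?(negbTE nab).
- by case: c; rewrite !permE /= ?xpair_eqE /= (introF eqP xa) (introF eqP xb) /= ?andbF.
Qed.


Lemma tD_sp k : tD n k = sp0 (tS n k).
Proof.
rewrite /tD /tS (big_morph (fun g : {perm 'I_n} => sp0 g) (fun g g' => esym (sp0M g g')) sp0_1).
by apply: eq_bigr => m _; exact: sgen_sp.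
Qed.

Lemma sS_val k (x : 'I_n) : 0 < k < n ->
  nat_of_ord (sS n k x) = if nat_of_ord x == k.-1 then k else if nat_of_ord x == k then k.-1 else nat_of_ord x.
Proof.
move=> /andP[k0 kn]; rewrite /sS.
case: insubP => [a _ Ha|]; last by rewrite (leq_ltn_trans (leq_pred k) kn).
case: insubP => [b _ Hb|]; last by rewrite kn.
case: (tpermP a b x) => [->|->|xa xb]; rewrite ?Ha ?Hb ?eqxx //.
  by case: ifP => // /eqP; lia.
rewrite -Ha -Hb !val_eqE (introF eqP xa) (introF eqP xb) //.
Qed.

Lemma sS2 k : sS n k * sS n k = 1.
Proof.
rewrite /sS; case: (insub k.-1 : option 'I_n) => [a|]; case: (insub k : option 'I_n) => [b|];
  by rewrite ?tperm2 ?mulg1.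
Qed.

Definition fw (L x : nat) : bool := (x == 0) || (x == L).

Lemma tpE (T : finType) (x y z : T) :
  tperm x y z = if z == x then y else if z == y then x else z.
Proof.
case: tpermP => [->|->|/eqP/negbTE -> /eqP/negbTE ->]; rewrite ?eqxx //.
by case: eqP => [->|].
Qed.

Lemma wD_sp L : 0 < L < n -> wD n L = sp (fun x => fw L x) 1.
Proof.
elim: L => [|L IH] //; case: L IH => [|L] IH /andP[_ Ln].
  rewrite /wD; have -> : rev (iota 1 1) = [:: 1%N] by [].
  rewrite /= big_cons !big_nil !mulg1 sgen_sp /sgen1' /sS /=.
  case: insubP => [a _ Ha|]; last by rewrite (ltn_trans _ Ln).
  case: insubP => [b _ Hb|]; last by rewrite Ln.
  apply/permP => -[c x]; rewrite permM !spE perm1 addbF.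
  have ab : a != b by rewrite -val_eqE Ha Hb.
  have ba : (b == a) = false by rewrite eq_sym (negbTE ab).
  rewrite /fw -Hb -Ha !val_eqE.
  have [->|xa] := eqVneq x a; last have [->|xb] := eqVneq x b.
  - case: c; rewrite permM !tpE /=; do 3 rewrite ?xpair_eqE /= ?eqxx /= ?(negbTE ab) ?ba /=; by [].
  - case: c; rewrite permM !tpE /=; do 3 rewrite ?xpair_eqE /= ?eqxx /= ?(negbTE ab) ?ba /=; by [].
    rewrite [tperm a b x]tpE (negbTE xa) (negbTE xb) /= addbF.
    case: c; rewrite permM !tpE /=; do 3 rewrite ?xpair_eqE /= ?eqxx /= ?(negbTE xa) ?(negbTE xb) /= ?andbF /=; by [].
have IH' := IH (ltnW Ln).
have E1 : rev (iota 1 L.+2) = L.+2 :: rev (iota 1 L.+1).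
  have -> : iota 1 L.+2 = iota 1 (L.+1 + 1) by rewrite addn1.
  by rewrite iotaD rev_cat /= add1n.
have E2 : iota 2 L.+2.-1 = iota 2 L.+1.-1 ++ [:: L.+2].
  have -> : iota 2 L.+2.-1 = iota 2 (L + 1) by rewrite addn1.
  by rewrite iotaD add2n.
have -> : wD n L.+2 = sgen n L.+2 * wD n L.+1 * sgen n L.+2.
  by rewrite /wD E1 E2 big_cons big_cat big_seq1 /= !mulgA.
rewrite IH' sgen_sp !spM; apply: sp_eq; last by rewrite mulg1 sS2.
move=> x /=; rewrite /fw sS_val ?Ln //=.
case: ifP => [/eqP -> |/eqP H1]; first by rewrite addbF; apply/idP/idP; lia.
case: ifP => [/eqP -> |/eqP H2]; first by rewrite addbF; apply/idP/idP; lia.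
by rewrite addbF (introF eqP H1); case: (val x =P L.+2) => // ?; apply/idP/idP; lia.
Qed.


Lemma tS_val k (x : 'I_n) : 0 < k <= n ->
  nat_of_ord (tS n k x) = if nat_of_ord x == 0 then k.-1 else if nat_of_ord x < k then (nat_of_ord x).-1 else nat_of_ord x.
Proof.
elim: k => [//|k IH] /andP[_ kn].
case: k IH kn => [|k] IH kn.
  rewrite /tS big_geq // perm1; case: (nat_of_ord x =P 0) => [->|] //.
  by case: ifP => //; lia.
rewrite /tS big_nat_recr //= permM sS_val /=; last by lia.
rewrite -/(tS n k.+1) IH; last by lia.
case: (eqVneq (nat_of_ord x) 0) => [x0|x0] /=; first by case: ifP; lia.
move/eqP: x0 => x0; case: (ltnP (nat_of_ord x) k.+1) => H /=; by repeat case: ifP => /=; lia.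
Qed.

Lemma tSX_sub k e (x : 'I_n) : 0 < k <= n -> e <= x < k -> nat_of_ord ((tS n k ^+ e) x) = x - e.
Proof.
move=> Hk; elim: e => [|e IH] He; first by rewrite expg0 perm1 subn0.
rewrite expgSr permM tS_val // IH; last by lia.
by repeat case: ifP => /=; lia.
Qed.

Lemma tSX_fix k e (x : 'I_n) : 0 < k <= n -> k <= x -> (tS n k ^+ e) x = x.
Proof.
move=> Hk Hx; elim: e => [|e IH]; first by rewrite expg0 perm1.
rewrite expgSr permM IH; apply: ord_inj; rewrite tS_val //.
by repeat case: ifP => /=; lia.
Qed.

Lemma tSX_0 k e (x : 'I_n) : 0 < k <= n -> 0 < e <= k -> nat_of_ord x = 0 ->
  nat_of_ord ((tS n k ^+ e) x) = k - e.
Proof.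
move=> Hk; case: e => [//|e] He Hx.
rewrite expgS permM tSX_sub //; rewrite tS_val // Hx /=; lia.
Qed.

End SP.

Section Pref.
Variables (n : nat) (i : nat -> nat) (K : nat).
Hypotheses (HK2 : 2 <= K) (HKn : K <= n) (HiK : i K != 0)
  (Hmin : forall k, 2 <= k < K -> i k = 0).

Definition Tm m : {perm 'I_n} := \prod_(k <- iota 1 m) tS n k.+1 ^+ i k.+1.
Definition Mm m := \sum_(k <- iota 1 m) i k.+1.

Lemma iota1S m : iota 1 m.+1 = iota 1 m ++ [:: m.+1].
Proof. by rewrite -[in LHS](addn1 m) iotaD /= add1n. Qed.

Lemma TmS m : Tm m.+1 = Tm m * tS n m.+2 ^+ i m.+2.
Proof. by rewrite /Tm iota1S big_cat big_seq1. Qed.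

Lemma MmS m : Mm m.+1 = Mm m + i m.+2.
Proof. by rewrite /Mm iota1S big_cat big_seq1. Qed.

Lemma Mm0 : Mm 0 = 0.
Proof. by rewrite /Mm big_nil. Qed.

Lemma Mm_zero m : m.+1 < K -> Mm m = 0.
Proof.
elim: m => [|m IH] H; first by rewrite Mm0.
rewrite MmS IH ?Hmin //; lia.
Qed.

Lemma Mm_ge m : K <= m.+1 -> i K <= Mm m.
Proof.
elim: m => [|m IH] H; first lia.
rewrite MmS; case: (ltnP K m.+2) => H2.
  by apply: leq_trans (IH _) (leq_addr _ _); lia.
have -> : K = m.+2 by lia.
exact: leq_addl.
Qed.

Lemma Mm_mono m m' : m <= m' -> Mm m <= Mm m'.
Proof.
elim: m' => [|m' IH] H; first by have -> : m = 0 by lia.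
case: (ltnP m m'.+1) => H2; last by have -> : m = m'.+1 by lia.
by rewrite MmS; apply: leq_trans (IH _) (leq_addr _ _); lia.
Qed.

Lemma Tm_fix m (x : 'I_n) : m.+1 <= n -> m.+1 <= x -> Tm m x = x.
Proof.
elim: m => [|m IH] Hm Hx; first by rewrite /Tm big_nil perm1.
rewrite TmS permM IH; try lia.
apply: tSX_fix; lia.
Qed.

Lemma Tm_c m : m.+1 <= n -> forall y (x : 'I_n), y < K -> y + Mm m <= K ->
  nat_of_ord x = (y + Mm m) %% K -> nat_of_ord (Tm m x) = y.
Proof.
elim: m => [|m IH] Hm y x Hy HyM Hx.
  by rewrite /Tm big_nil perm1 Hx Mm0 addn0 modn_small.
rewrite MmS in HyM Hx.
rewrite TmS permM.
case: (posnP (i m.+2)) => e0.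
  rewrite e0 expg0 perm1; apply: IH; rewrite ?e0 ?addn0 in HyM Hx |- *; try lia; exact: Hx.
have Kk : K <= m.+2.
  rewrite leqNgt; apply/negP => H; move: e0; rewrite Hmin //; lia.
case: (ltnP (y + i m.+2) K) => Hye.
  have H1 : nat_of_ord (Tm m x) = y + i m.+2.
    apply: IH; try lia.
    by rewrite Hx; congr (_ %% _); lia.
  rewrite tSX_sub ?H1; lia.
have M0 : Mm m = 0 by lia.
have KE : K = m.+2.
  case: (ltnP m.+1 K) => H; first lia.
  have := Mm_ge H; rewrite M0; move: HiK; case: (i K) => //.
have H1 : nat_of_ord (Tm m x) = 0.
  apply: IH; rewrite ?M0; try lia.
  rewrite Hx M0 !add0n ?mod0n; have -> : y + i m.+2 = K by lia. by rewrite modnn.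
rewrite tSX_0 //; lia.
Qed.

Lemma Wstep m (x : 'I_n) : m.+1 < n -> Mm m <= K ->
  fw m.+1 (Tm m x) = ((0 < Mm m < K) && fw (Mm m) x) (+) fw m.+1 x.
Proof.
move=> Hm HMK.
have Hc : Mm m %% K < n by apply: leq_trans (ltn_pmod _ _) HKn; lia.
pose xc := Ordinal Hc.
have Txc : nat_of_ord (Tm m xc) = 0 by apply: Tm_c => //=; lia.
have E1 : (nat_of_ord (Tm m x) == 0) = (nat_of_ord x == Mm m %% K).
  rewrite -Txc.
  have -> : (nat_of_ord (Tm m x) == nat_of_ord (Tm m xc)) = (Tm m x == Tm m xc) by [].
  by rewrite (inj_eq perm_inj).
have E2 : (nat_of_ord (Tm m x) == m.+1) = (nat_of_ord x == m.+1).
  case: (nat_of_ord x =P m.+1) => H.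
    by rewrite Tm_fix ?H ?eqxx //; lia.
  apply/eqP => H'; apply: H.
  have F : Tm m (Tm m x) = Tm m x by apply: Tm_fix; lia.
  by move/perm_inj: F => F; rewrite -H' F.
rewrite /fw E1 E2.
case: (posnP (Mm m)) => M0.
  by rewrite M0 mod0n.
have KL : K <= m.+1.
  by case: (ltnP m.+1 K) => // H; move: M0; rewrite Mm_zero.
case: (ltnP (Mm m) K) => MK /=.
  rewrite modn_small //.
  case: (nat_of_ord x =P 0); case: (nat_of_ord x =P Mm m); case: (nat_of_ord x =P m.+1) => /=; lia.
have -> : Mm m = K by lia.
by rewrite modnn.
Qed.

End Pref.

Section Chunk.
Variables (K x : nat).

Definition gsign (M : nat) : bool := (0 < M < K) && fw M x.

Fixpoint gsn (M : nat) (s : seq fac) : bool :=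
  match s with
  | [::] => false
  | FT _ e :: s' => gsn (M + e) s'
  | FW _ :: s' => gsign M (+) gsn M s'
  end.

Fixpoint wsn (s : seq fac) : bool :=
  match s with
  | [::] => false
  | FT _ _ :: s' => wsn s'
  | FW L :: s' => fw L x (+) wsn s'
  end.

Definition tsum (s : seq fac) := sumn [seq texp f | f <- s].

Definition ccond M (cs : seq (seq fac)) m :=
  let c := nth [::] cs m in
  [&& isWchunk c, odd (size c), 0 < M + majAt cs m & M + majAt cs m < K].

Definition csum M cs :=
  \big[addb/false]_(m < size cs | ccond M cs m) fw (M + majAt cs m) x.

Lemma majAt0 cs : majAt cs 0 = 0.
Proof. by rewrite /majAt take0. Qed.

Lemma majAtS c cs m : majAt (c :: cs) m.+1 = tsum c + majAt cs m.
Proof. by rewrite /majAt /= map_cat sumn_cat. Qed.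

Lemma csum_cons M c cs :
  csum M (c :: cs) =
  ([&& isWchunk c, odd (size c), 0 < M & M < K] && fw M x) (+) csum (M + tsum c) cs.
Proof.
rewrite /csum big_mkcond big_ord_recl; congr (_ (+) _).
  by rewrite /ccond /= majAt0 addn0; case: ifP.
rewrite [RHS]big_mkcond; apply: eq_bigr => m _.
by rewrite /ccond lift0 /= majAtS addnA.
Qed.

Lemma chunk_cons a s : chunk (a :: s) =
  match chunk s with
  | (y :: g) :: rest => if isW a == isW y then (a :: y :: g) :: rest else [:: a] :: chunk s
  | _ => [:: a] :: chunk s
  end.
Proof. by []. Qed.

Lemma chunk_gsn s M : csum M (chunk s) = gsn M s.
Proof.
elim: s M => [|a s IH] M; first by rewrite /csum big_ord0.
have NM : forall cs, (forall M, csum M cs = gsn M s) -> csum M ([:: a] :: cs) = gsn M (a :: s).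
  move=> cs IHc; rewrite csum_cons IHc /tsum.
  by case: a => [k e|L] /=; rewrite ?addn0.
rewrite chunk_cons; move: IH; case: (chunk s) => [|[|y g] rest] IH; try exact: NM.
case: ifP => E; last exact: NM.
clear NM.
rewrite csum_cons.
case: a E => [k e|L] /= E; rewrite -IH csum_cons /tsum /=; move: E; case: (isW y) => //= _.
  by rewrite addnA.
rewrite add0n; move: (csum _ _) => C; rewrite /gsign.
by case: (odd (size g)); case: (0 < M); case: (M < K); case: (fw M x); case: C.
Qed.

Lemma gsn_cat s t M : gsn M (s ++ t) = gsn M s (+) gsn (M + tsum s) t.
Proof.
elim: s M => [|a s IH] M /=; first by rewrite addn0.
by case: a => [k e|L] /=; rewrite IH /tsum /= ?addnA ?add0n ?addbA.
Qed.

Lemma wsn_cat s t : wsn (s ++ t) = wsn s (+) wsn t.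
Proof.
elim: s => [|a s IH] //=.
by case: a => [k e|L] /=; rewrite IH ?addbA.
Qed.

End Chunk.

Lemma prod_sp n (I : Type) (r : seq I) (P : pred I) (F : I -> 'I_n -> bool) :
  \prod_(a <- r | P a) sp (F a) 1 = sp (fun x => \big[addb/false]_(a <- r | P a) F a x) 1.
Proof.
elim: r => [|a r IH]; first by rewrite big_nil -sp0_1; apply: sp_eq => // x; rewrite big_nil.
rewrite big_cons IH; case: ifP => Pa.
  by rewrite spM mulg1; apply: sp_eq => // x; rewrite big_cons Pa perm1.
by apply: sp_eq => // x; rewrite big_cons Pa.
Qed.

Lemma Phi_sp n f g (x : 'I_n) : Phi (sp f g) x = g x.
Proof. by rewrite /Phi spE. Qed.

Lemma sS_triv n m : ~~ (0 < m < n) -> sS n m = 1.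
Proof.
move=> H; rewrite /sS; case: insubP => [a _ Ha|] //; case: insubP => [b _ Hb|] //.
have ab : a = b.
  apply: val_inj; rewrite Ha Hb; have := ltn_ord b; rewrite Hb => Hm.
  by move: H; rewrite Hm andbT; case: (m) => //.
by rewrite ab tperm1.
Qed.

Lemma sgen_Scirc n m : sgen n m \in Scirc n.
Proof.
case: (boolP (0 < m < n)) => H.
  apply: mem_gen; apply/imsetP; exists (Ordinal (proj2 (andP H))) => //.
  by rewrite inE /=; case/andP: H.
by rewrite sgen_sp sS_triv // sp0_1 group1.
Qed.

Lemma Scirc_Dn n : Scirc n \subset Dn n.
Proof. by rewrite /Scirc /Dn genS // subsetUr. Qed.

Lemma sgen_Dn n m : sgen n m \in Dn n.
Proof. exact: (subsetP (Scirc_Dn n)) (sgen_Scirc n m). Qed.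

Lemma wD_Dn n L : wD n L \in Dn n.
Proof.
rewrite /wD; apply: groupM; first apply: groupM.
- by apply: group_prod => m _; exact: sgen_Dn.
- by apply: mem_gen; rewrite setU11.
- by apply: group_prod => m _; exact: sgen_Dn.
Qed.

Lemma tD_Scirc n k : tD n k \in Scirc n.
Proof. by apply: group_prod => m _; exact: sgen_Scirc. Qed.

Lemma sgen1'_sp n : 1 < n -> sgen1' n = sp (fun _ => false) (sS n 1) * sp (fun x => fw 1 x) 1.
Proof.
move=> Hn; rewrite -sgen_sp -(wD_sp (n:=n) (L:=1)) ?Hn // /wD.
have -> : rev (iota 1 1) = [:: 1%N] by [].
rewrite /= big_cons !big_nil !mulg1 mulgA.
by rewrite sgen_sp sp0M sS2 sp0_1 mul1g.
Qed.

Lemma Dn_mul n (a b : {perm pt n}) : a \in Dn n -> b \in Dn n -> a * b \in Dn n.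
Proof. exact: groupM. Qed.
Lemma Dn_prod n (I : Type) (r : seq I) (P : pred I) (F : I -> {perm pt n}) :
  (forall x, P x -> F x \in Dn n) -> \prod_(x <- r | P x) F x \in Dn n.
Proof. exact: group_prod. Qed.
Lemma Dn_one n : (1 : {perm pt n}) \in Dn n.
Proof. exact: group1. Qed.
Lemma Scirc_prod n (I : Type) (r : seq I) (P : pred I) (F : I -> {perm pt n}) :
  (forall x, P x -> F x \in Scirc n) -> \prod_(x <- r | P x) F x \in Scirc n.
Proof. exact: group_prod. Qed.
Lemma Scirc_X n (a : {perm pt n}) e : a \in Scirc n -> a ^+ e \in Scirc n.
Proof. exact: groupX. Qed.

Section Groups.
Variable n : nat.

Definition USet : {set {perm pt n}} :=
  [set p : {perm pt n} | [forall c, [forall x, p (c, x) == (c, (p (false, x)).2)]]].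
Definition SSet : {set {perm pt n}} :=
  [set p : {perm pt n} | [forall c, [forall x, p (c, x) == (c (+) (p (false, x)).1, (p (false, x)).2)]]].

Lemma USetP (p : {perm pt n}) : reflect (forall c x, p (c, x) = (c, (p (false, x)).2)) (p \in USet).
Proof.
rewrite inE; apply: (iffP forallP) => H c.
  by move=> x; move/forallP: (H c) => /(_ x) /eqP.
by apply/forallP => x; rewrite H.
Qed.

Lemma SSetP (p : {perm pt n}) : reflect (forall c x, p (c, x) = (c (+) (p (false, x)).1, (p (false, x)).2)) (p \in SSet).
Proof.
rewrite inE; apply: (iffP forallP) => H c.
  by move=> x; move/forallP: (H c) => /(_ x) /eqP.
by apply/forallP => x; rewrite H.
Qed.

Lemma USet_group : group_set USet.
Proof.
apply/group_setP; split; first by apply/USetP => c x; rewrite !perm1.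
move=> p q /USetP Hp /USetP Hq; apply/USetP => c x.
by rewrite !permM Hp Hq [in RHS]Hp.
Qed.

Lemma SSet_group : group_set SSet.
Proof.
apply/group_setP; split; first by apply/SSetP => c x; rewrite !perm1 addbF.
move=> p q /SSetP Hp /SSetP Hq; apply/SSetP => c x.
rewrite !permM Hp Hq [in RHS]Hp Hq /=.
by rewrite [in RHS]Hq /= addbA.
Qed.

Canonical USet_grp := Group USet_group.
Canonical SSet_grp := Group SSet_group.

Lemma sp_SSet f g : sp f g \in SSet.
Proof. by apply/SSetP => c x; rewrite !spE. Qed.

Lemma Scirc_USet : Scirc n \subset USet.
Proof.
rewrite /Scirc gen_subG; apply/subsetP => p /imsetP [k _ ->].
by apply/USetP => c x; rewrite sgen_sp !spE addbF.
Qed.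

Lemma Dn_SSet : 1 < n -> Dn n \subset SSet.
Proof.
move=> Hn; rewrite /Dn gen_subG; apply/subsetP => p; case/setU1P => [->|].
  rewrite sgen1'_sp // spM; exact: sp_SSet.
move/imsetP => [k _ ->]; rewrite sgen_sp; exact: sp_SSet.
Qed.

Opaque Scirc Dn USet SSet Idbullet.

Lemma Idbullet_sp (a : {perm pt n}) : 1 < n -> a \in Idbullet n -> a = sp (fun x => (a (false, x)).1) 1.
Proof.
move=> Hn; rewrite inE => /andP [aD /forallP HP].
have Ha1 : a \in SSet := subsetP (Dn_SSet Hn) a aD.
move: Ha1 => /SSetP Ha.
apply/permP => -[c x]; rewrite Ha spE perm1.
by move: (HP x); rewrite /Phi => /eqP ->.
Qed.

Lemma Scirc_sp (b : {perm pt n}) : b \in Scirc n -> exists g, b = sp (fun _ => false) g.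
Proof.
move=> bS; have Hb1 : b \in USet := subsetP Scirc_USet b bS; move: Hb1 => /USetP Hb.
have inj : injective (fun x => (b (false, x)).2).
  move=> x y E; have : b (false, x) = b (false, y) by rewrite (Hb false x) (Hb false y) E.
  by move/perm_inj => [].
exists (perm inj); apply/permP => -[c x]; by rewrite Hb spE addbF permE.
Qed.

End Groups.


Section Main.
Variables (n : nat) (i j : nat -> nat).
Hypothesis hn : 2 <= n.
Hypothesis Hj : forall k, 1 <= k <= n - 1 -> j k <= 1.
Hypothesis Hsz : 1 <= size (tidx n i).
Hypothesis Hsum : \sum_(k <- tidx n i) i k <= head 0 (tidx n i).
Local Notation K := (head 0 (tidx n i)).

Definition blk k := (if j k != 0 then [:: FW k] else [::]) ++
  (if i k.+1 != 0 then [:: FT k.+1 (i k.+1)] else [::]).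
Definition redm m := flatten [seq blk k | k <- iota 1 m].

Lemma red_redm : red n i j = redm n.-1.
Proof. by []. Qed.

Lemma redmS m : redm m.+1 = redm m ++ blk m.+1.
Proof. by rewrite /redm iota1S map_cat flatten_cat /= cats0. Qed.

Lemma tsum_cat s t : tsum (s ++ t) = tsum s + tsum t.
Proof. by rewrite /tsum map_cat sumn_cat. Qed.

Lemma tsum_blk k : tsum (blk k) = i k.+1.
Proof.
rewrite /blk /tsum; case: (j k != 0); case: (i k.+1 =P 0) => [->|] //= _;
  by rewrite ?addn0.
Qed.

Lemma tsum_redm m : tsum (redm m) = Mm i m.
Proof.
elim: m => [|m IH]; first by rewrite Mm0.
by rewrite redmS tsum_cat IH tsum_blk MmS.
Qed.

Lemma gsn_blk x M k : gsn K x M (blk k) = (j k != 0) && gsign K x M.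
Proof.
by rewrite /blk; case: (j k != 0); case: (i k.+1 != 0) => /=; rewrite ?addbF.
Qed.

Lemma wsn_blk x k : wsn x (blk k) = (j k != 0) && fw k x.
Proof.
by rewrite /blk; case: (j k != 0); case: (i k.+1 != 0) => /=; rewrite ?addbF.
Qed.

Lemma K_facts : [/\ 2 <= K, K <= n, i K != 0 & forall k, 2 <= k < K -> i k = 0].
Proof.
have Hs : sorted ltn (tidx n i) := sorted_filter ltn_trans _ (iota_ltn_sorted 2 n.-1).
have Hmem : forall k, (k \in tidx n i) = (i k != 0) && (k \in iota 2 n.-1).
  by move=> k; rewrite /tidx mem_filter.
move: Hs Hmem Hsz; case: (tidx n i) => [|K' rest] //= Hs Hmem _.
have := Hmem K'; rewrite mem_head mem_iota => /esym/andP [iK /andP [K2 Kn]].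
split => //; try lia.
move=> k /andP [k2 kK]; case: (i k =P 0) => // /eqP ik; exfalso.
have : k \in K' :: rest.
  by rewrite Hmem ik mem_iota; apply/andP; split; lia.
rewrite inE => /orP [/eqP E | kr]; first lia.
have := order_path_min ltn_trans Hs; move/allP => /(_ k kr); lia.
Qed.

Lemma tidx_big (R : Type) (idx : R) (op : Monoid.law idx) (F : nat -> R) :
  (forall k, i k = 0 -> F k = idx) ->
  \big[op/idx]_(k <- tidx n i) F k = \big[op/idx]_(k <- iota 1 n.-1) F k.+1.
Proof.
move=> HF; rewrite /tidx big_filter big_mkcond.
have -> : iota 2 n.-1 = [seq k.+1 | k <- iota 1 n.-1].
  by rewrite -[2]/(1 + 1) iotaDl; apply: eq_map => k; rewrite add1n.
rewrite big_map; apply: eq_bigr => k _.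
by case: (i k.+1 =P 0) => [H|H] /=; [rewrite HF | ].
Qed.

Lemma tidx_sum : \sum_(k <- tidx n i) i k = Mm i n.-1.
Proof. by rewrite tidx_big. Qed.

Lemma PhiOGS_Tm : PhiOGS n i = Tm n i n.-1.
Proof. by rewrite /PhiOGS tidx_big // => k ->. Qed.

Lemma piCirc_sp : piCirc n i = sp (fun _ => false) (PhiOGS n i).
Proof.
rewrite /piCirc /PhiOGS (big_morph (fun g : {perm 'I_n} => sp (fun _ => false) g)
  (fun g g' => esym (sp0M g g')) (sp0_1 n)).
by apply: eq_bigr => k _; rewrite tD_sp sp0X.
Qed.

Lemma bigcatM (T : finType) (I : Type) (s t : seq I) (P : pred I) (F : I -> {perm T}) :
  \prod_(x <- s ++ t | P x) F x = (\prod_(x <- s | P x) F x) * \prod_(x <- t | P x) F x.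
Proof. by rewrite big_cat. Qed.

Definition Nm m := \prod_(k <- iota 1 m) (wD n k ^+ j k * tD n k.+1 ^+ i k.+1).

Lemma NmS m : Nm m.+1 = Nm m * (wD n m.+1 ^+ j m.+1 * tD n m.+2 ^+ i m.+2).
Proof. by rewrite /Nm iota1S big_cat big_seq1. Qed.

Lemma Nm_sp m : m <= n.-1 ->
  Nm m = sp (fun x => gsn K x 0 (redm m) (+) wsn x (redm m)) (Tm n i m).
Proof.
have [K2 Kn iK Kmin] := K_facts.
have HMK : Mm i n.-1 <= K by rewrite -tidx_sum.
elim: m => [|m IH] Hm.
  by rewrite /Nm /Tm !big_nil -sp0_1; apply: sp_eq.
rewrite NmS IH; last lia.
rewrite TmS redmS tD_sp sp0X.
have Hjm : j m.+1 <= 1 by apply: Hj; lia.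
have MK : Mm i m <= K by apply: (leq_trans _ HMK); apply: (Mm_mono K2 Kn iK); lia.
have [Ej|Ej] : j m.+1 = 0%N \/ j m.+1 = 1%N by lia.
  rewrite Ej expg0 mul1g spM; apply: sp_eq => // x.
  by rewrite gsn_cat wsn_cat gsn_blk wsn_blk Ej /= !addbF.
rewrite Ej expg1 wD_sp; last lia.
rewrite mulgA !spM mulg1; apply: sp_eq => // x.
rewrite gsn_cat wsn_cat gsn_blk wsn_blk Ej /= add0n tsum_redm addbF.
rewrite (Wstep K2 Kn iK Kmin) //; last lia.
rewrite /gsign.
move: (gsn _ _ _ _) (wsn _ _) (_ && _) (fw _ _) => a b c d.
move: (fw m.+1 x) => e.
by case: a; case: b; case: c; case: d; case: e.
Qed.

Lemma wprod m : m <= n.-1 ->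
  \prod_(f <- redm m | isW f) wval n f = sp (fun x => wsn x (redm m)) 1.
Proof.
elim: m => [|m IH] Hm; first by rewrite big_nil -sp0_1; apply: sp_eq.
rewrite redmS bigcatM IH; last lia.
have -> : \prod_(f <- blk m.+1 | isW f) wval n f = if j m.+1 != 0 then wD n m.+1 else 1.
  rewrite /blk big_cat /=; case: (j m.+1 != 0); case: (i m.+2 != 0);
    by rewrite /= ?big_cons ?big_nil /= ?mulg1.
case: ifP => Ej.
  rewrite wD_sp; last lia.
  rewrite spM mulg1; apply: sp_eq => // x.
  by rewrite wsn_cat wsn_blk Ej perm1.
rewrite mulg1; apply: sp_eq => // x.
by rewrite wsn_cat wsn_blk Ej addbF.
Qed.

Lemma piBullet_sp :
  piBullet n i j = sp (fun x => csum K x 0 (chunk (red n i j)) (+) wsn x (red n i j)) 1.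
Proof.
have [K2 Kn iK Kmin] := K_facts.
rewrite /piBullet red_redm wprod //.
set cs := chunk (redm n.-1).
rewrite (eq_bigr (fun m : 'I_(size cs) => sp (fun x => fw (majAt cs m) x) 1)); last first.
  move=> m; rewrite /inA /= red_redm -/cs => /and4P [_ _ m0 mK]; apply: wD_sp; lia.
rewrite prod_sp spM mulg1; apply: sp_eq => // x.
rewrite perm1; congr (_ (+) _).
Qed.

End Main.

Unset Implicit Arguments.
Set Strict Implicit.
Theorem mainTheorem8 (n : nat) (hn : 2 <= n) (i j : nat -> nat)
    (pi : {perm pt n}) :
  (forall k, 2 <= k <= n -> i k <= k - 1) ->
  (forall k, 1 <= k <= n - 1 -> j k <= 1) ->
  pi \in Dn n ->
  pi = nf n i j ->
  1 <= size (tidx n i) ->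
  \sum_(k <- tidx n i) i k <= head 0 (tidx n i) ->
  [/\ piBullet n i j \in Idbullet n,
      piCirc n i \in Scirc n,
      pi = piBullet n i j * piCirc n i,
      (forall a b, a \in Idbullet n -> b \in Scirc n -> pi = a * b ->
         a = piBullet n i j /\ b = piCirc n i)
    & (Phi (piCirc n i) =1 PhiOGS n i /\ Phi pi =1 PhiOGS n i)].
Proof.
move=> Hi Hj pD Epi Hsz Hsum.
have EN : nf n i j = Nm n i j n.-1 by rewrite /nf /Nm /index_iota subn1.
have EP : pi = sp (fun x => gsn (head 0 (tidx n i)) x 0 (red n i j) (+) wsn x (red n i j)) (PhiOGS n i).
  by rewrite Epi EN Nm_sp // PhiOGS_Tm.
have EB := piBullet_sp j hn Hsz Hsum.
have EC := piCirc_sp n i.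
have Eq : pi = piBullet n i j * piCirc n i.
  rewrite EP EB EC spM mul1g; apply: sp_eq => // x; by rewrite chunk_gsn addbF.
split.
- rewrite inE; apply/andP; split.
    rewrite /piBullet; apply: Dn_mul; apply: Dn_prod.
      by move=> m _; exact: wD_Dn.
    by case=> [k e|L] _ /=; [exact: Dn_one | exact: wD_Dn].
  by apply/forallP => x; rewrite EB Phi_sp perm1.
- rewrite /piCirc; apply: Scirc_prod => k _; apply: Scirc_X; exact: tD_Scirc.
- exact: Eq.
- move=> a b aI bS Eab.
  move: (Idbullet_sp hn aI); set Fa := (fun x => _) => Ea.
  have [g Eb] := Scirc_sp bS.
  have E2 : a * b = piBullet n i j * piCirc n i by rewrite -Eab.
  rewrite Ea Eb EB EC !spM in E2.
  case/sp_inj: E2 => Hf Hg.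
  split.
    rewrite Ea EB; apply: sp_eq => // x.
    by move: (Hf x); rewrite !addbF.
  by rewrite Eb EC; apply: sp_eq => //; move: Hg; rewrite !mul1g.
- by split => x; [rewrite EC Phi_sp | rewrite EP Phi_sp].
Qed.
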